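(* If there exists a T2R semigroup, then there exists a T2R semigroup $S=S_0\cup S_1$ which contains an element $b\in S_0$ with $|J_b|=2$ and $I(b)=\{0\}$.
   Context: A semigroup $S$ is a $\Delta$-semigroup if the lattice of all congruences of $S$ is a chain with respect to inclusion. A semigroup $N$ with zero $0$ is nil if every element has some power equal to $0$; non-trivial means having more than one element. A T2R semigroup is a $\Delta$-semigroup $S$ which is the disjoint union of a non-trivial nil ideal $S_0$ (with zero $0$, which is then the zero of $S$) and a subsemigroup $S_1$ which is a two-element right zero semigroup (i.e. $S_1=\{u,v\}$ with $xy=y$ for $x,y\in S_1$). $S^1$ denotes $S$ with an identity $1$ adjoined. For $a\in S$: $J(a)=S^1aS^1$, $J_a=\{s\in S:J(s)=J(a)\}$, $I(a)=J(a)\setminus J_a$. *)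

(* Defs.v *)
From Stdlib Require Import Arith.

Section Semigroups.
Variable T : Type.
Variable mul : T -> T -> T.

Definition associative_op : Prop :=
  forall x y z, mul x (mul y z) = mul (mul x y) z.

Definition congruence (R : T -> T -> Prop) : Prop :=
  (forall x, R x x) /\ (forall x y, R x y -> R y x) /\
  (forall x y z, R x y -> R y z -> R x z) /\
  (forall a b c, R a b -> R (mul c a) (mul c b) /\ R (mul a c) (mul b c)).

Definition delta_semigroup : Prop :=
  associative_op /\
  forall R1 R2, congruence R1 -> congruence R2 ->
    (forall x y, R1 x y -> R2 x y) \/ (forall x y, R2 x y -> R1 x y).

(* pow x n = x^(n+1) *)
Fixpoint pow (x : T) (n : nat) : T :=
  match n with O => x | S k => mul (pow x k) x end.

Definition T2R (S0 : T -> Prop) (z u v : T) : Prop :=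
  delta_semigroup /\
  u <> v /\
  (forall x, S0 x <-> (x <> u /\ x <> v)) /\
  (forall x s, S0 x -> S0 (mul x s) /\ S0 (mul s x)) /\
  S0 z /\ (forall x, S0 x -> mul z x = z /\ mul x z = z) /\
  (forall x, S0 x -> exists n, pow x n = z) /\
  (exists x, S0 x /\ x <> z) /\
  mul u u = u /\ mul u v = v /\ mul v u = u /\ mul v v = v.

(* Multiplication by an element of S^1 = S + {1} (None = adjoined identity). *)
Definition lmul1 (s : option T) (a : T) : T :=
  match s with None => a | Some s => mul s a end.
Definition rmul1 (a : T) (t : option T) : T :=
  match t with None => a | Some t => mul a t end.

Definition Jideal (a x : T) : Prop :=
  exists s t : option T, x = rmul1 (lmul1 s a) t.

Definition Jclass (a x : T) : Prop :=
  forall y, Jideal x y <-> Jideal a y.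

Definition Iideal (a x : T) : Prop := Jideal a x /\ ~ Jclass a x.

End Semigroups.

Arguments associative_op {T}.
Arguments congruence {T}.
Arguments delta_semigroup {T}.
Arguments pow {T}.
Arguments T2R {T}.
Arguments Jideal {T}.
Arguments Jclass {T}.
Arguments Iideal {T}.

(* Main.v *)
Require Import Defs.
From Stdlib Require Import Classical ClassicalEpsilon ProofIrrelevance.

Section Gen.
Variable (X : Type) (m : X -> X -> X) (Ha : associative_op m).

Definition oc (s t : option X) : option X :=
  match s, t with
  | None, t => t
  | s, None => s
  | Some a, Some b => Some (m a b)
  end.

Lemma lmul_lmul s s' x : lmul1 _ m s' (lmul1 _ m s x) = lmul1 _ m (oc s' s) x.
Proof. destruct s, s'; simpl; auto. Qed.

Lemma rmul_rmul x t t' : rmul1 _ m (rmul1 _ m x t) t' = rmul1 _ m x (oc t t').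
Proof. destruct t, t'; simpl; auto. Qed.

Lemma lmul_rmul s x t : lmul1 _ m s (rmul1 _ m x t) = rmul1 _ m (lmul1 _ m s x) t.
Proof. destruct s, t; simpl; auto. Qed.

Lemma Jrefl a : Jideal m a a.
Proof. exists None, None. reflexivity. Qed.

Lemma Jtrans a x y : Jideal m a x -> Jideal m x y -> Jideal m a y.
Proof.
  intros [s [t ->]] [s' [t' ->]].
  exists (oc s' s), (oc t t').
  rewrite lmul_rmul, rmul_rmul, lmul_lmul. reflexivity.
Qed.

Lemma Jl a x s : Jideal m a x -> Jideal m a (m s x).
Proof. intro H. apply (Jtrans _ _ _ H). exists (Some s), None. reflexivity. Qed.

Lemma Jr a x s : Jideal m a x -> Jideal m a (m x s).
Proof. intro H. apply (Jtrans _ _ _ H). exists None, (Some s). reflexivity. Qed.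

Lemma pow_comm x n : m x (pow m x n) = m (pow m x n) x.
Proof. induction n; simpl; auto. rewrite Ha, IHn. reflexivity. Qed.

End Gen.

Section A.
Variable (T : Type) (mul : T -> T -> T) (S0 : T -> Prop) (z u v : T).
Hypothesis assoc : associative_op mul.
Hypothesis delta : forall R1 R2, congruence mul R1 -> congruence mul R2 ->
    (forall x y, R1 x y -> R2 x y) \/ (forall x y, R2 x y -> R1 x y).
Hypothesis uv : u <> v.
Hypothesis HS0 : forall x, S0 x <-> (x <> u /\ x <> v).
Hypothesis Hid : forall x s, S0 x -> S0 (mul x s) /\ S0 (mul s x).
Hypothesis Sz : S0 z.
Hypothesis Hzero : forall x, S0 x -> mul z x = z /\ mul x z = z.
Hypothesis Hnil : forall x, S0 x -> exists n, pow mul x n = z.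
Hypothesis Hnt : exists x, S0 x /\ x <> z.
Hypothesis Huu : mul u u = u.
Hypothesis Huv : mul u v = v.
Hypothesis Hvu : mul v u = u.
Hypothesis Hvv : mul v v = v.

Lemma notS0 x : ~ S0 x -> x = u \/ x = v.
Proof. intro H. destruct (classic (x = u)); auto. destruct (classic (x = v)); auto.
  exfalso; apply H; apply HS0; split; auto. Qed.

Lemma S0u : ~ S0 u. Proof. intro H. apply HS0 in H. tauto. Qed.
Lemma S0v : ~ S0 v. Proof. intro H. apply HS0 in H. tauto. Qed.

Lemma idr x s : S0 x -> S0 (mul x s). Proof. intro H; apply (Hid x s H). Qed.
Lemma idl x s : S0 x -> S0 (mul s x). Proof. intro H; apply (Hid x s H). Qed.
Hint Resolve idl idr : core.

Lemma zl s : mul z s = z.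
Proof.
  assert (H : S0 (mul z s)) by (auto; auto).
  replace (mul z s) with (mul (mul z z) s) by (rewrite (proj1 (Hzero z Sz)); auto).
  rewrite <- assoc. apply Hzero; auto.
Qed.

Lemma zr s : mul s z = z.
Proof.
  assert (H : S0 (mul s z)) by (auto; auto).
  replace (mul s z) with (mul s (mul z z)) by (rewrite (proj1 (Hzero z Sz)); auto).
  rewrite assoc. apply Hzero; auto.
Qed.

Definition rees (x y : T) : Prop := x = y \/ (S0 x /\ S0 y).

Lemma rees_cong : congruence mul rees.
Proof.
  unfold rees; split; [|split; [|split]].
  - auto.
  - intros x y [H|H]; [left; auto | right; tauto].
  - intros x y w [H|H] [H'|H']; subst; auto; right; tauto.
  - intros a b c [H|[H1 H2]]; [subst; split; left; auto|].
    split; right; split; auto; auto.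
Qed.

Lemma sq0 : (forall x, S0 x -> mul x u = mul x v) -> forall s x, S0 s -> S0 x -> mul s x = z.
Proof.
  intros Hc.
  set (tau := fun x y => forall s, S0 s -> mul s x = mul s y).
  assert (Ct : congruence mul tau).
  { unfold tau; split; [|split; [|split]].
    - auto.
    - intros; symmetry; auto.
    - intros x y w H1 H2 s Hs. rewrite H1, H2; auto.
    - intros a b c H. split; intros s Hs.
      + rewrite !assoc. apply H. auto; auto.
      + rewrite !assoc. rewrite H; auto. }
  destruct (delta _ _ Ct rees_cong) as [H|H].
  - exfalso. destruct (H u v) as [E|[E _]]; [intros s Hs; apply Hc; auto | auto |].
    exact (S0u E).
  - intros s x Hs Hx. rewrite <- (zr s). apply (H x z); auto. right; auto.
Qed.

Lemma exists_b : exists x0, S0 x0 /\ mul x0 u <> mul x0 v.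
Proof.
  apply NNPP. intro Hn.
  assert (Hc : forall x, S0 x -> mul x u = mul x v).
  { intros x Hx. apply NNPP. intro E. apply Hn. exists x; auto. }
  pose proof (sq0 Hc) as Hsq.
  set (UV := fun x => x = u \/ x = v).
  assert (UVm : forall w a, UV a -> ~ S0 w -> UV (mul w a)).
  { intros w a Ha Hw. destruct (notS0 _ Hw), Ha; subst; unfold UV;
      first [rewrite Huu|rewrite Huv|rewrite Hvu|rewrite Hvv]; auto. }
  destruct (classic (forall x, S0 x -> mul u x = mul v x)) as [Hall|Hex].
  - set (al := fun x y => x = y \/ (UV x /\ UV y)).
    assert (Ca : congruence mul al).
    { unfold al; split; [|split; [|split]].
      - auto.
      - intros x y [H|H]; [left; auto| right; tauto].
      - intros x y w [H|H] [H'|H']; subst; auto; right; tauto.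
      - intros a b c [H|[H1 H2]]; [subst; split; left; auto|].
        split.
        + destruct (classic (S0 c)) as [Sc|Sc].
          * left. destruct H1, H2; subst; auto; symmetry; auto.
          * right; split; apply UVm; auto.
        + destruct (classic (S0 c)) as [Sc|Sc].
          * left. destruct H1, H2; subst; auto; symmetry; auto.
          * left. destruct (notS0 _ Sc), H1, H2; subst; congruence. }
    destruct (delta _ _ Ca rees_cong) as [H|H].
    + destruct (H u v) as [E|[E _]]. right; split; unfold UV; auto. auto. exact (S0u E).
    + destruct Hnt as [x [Sx Nx]].
      destruct (H x z) as [E|[[E|E] _]]; [right; auto| auto | subst; exact (S0u Sx) | subst; exact (S0v Sx)].
  - apply not_all_ex_not in Hex. destruct Hex as [c Hc'].
    assert (Sc : S0 c) by (apply NNPP; intro; apply Hc'; tauto).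
    assert (Nc : mul u c <> mul v c) by (intro; apply Hc'; auto).
    set (K := fun x => S0 x /\ mul u x = mul v x).
    assert (KUV : forall x, K x -> UV x -> False).
    { intros x [Sx _] [E|E]; subst; [exact (S0u Sx)|exact (S0v Sx)]. }
    set (al := fun x y => x = y \/ (UV x /\ UV y) \/ (K x /\ K y)).
    assert (Ca : congruence mul al).
    { unfold al; split; [|split; [|split]].
      - auto.
      - intros x y [H|[H|H]]; [left; auto| right; left; tauto | right; right; tauto].
      - intros x y w [H|[H|H]] [H'|[H'|H']]; subst; auto;
          try (right; left; tauto); try (right; right; tauto);
          exfalso; eapply KUV; try apply H; try apply H'; tauto.
      - intros a b c0 [H|[[H1 H2]|[H1 H2]]]; [subst; split; left; auto| |].
        + split.
          * destruct (classic (S0 c0)) as [Sc0|Sc0].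
            -- left. destruct H1, H2; subst; auto; symmetry; auto.
            -- right; left; split; apply UVm; auto.
          * destruct (classic (S0 c0)) as [Sc0|Sc0].
            -- right; right.
               assert (Kx : forall w, UV w -> K (mul w c0)).
               { intros w [E|E]; subst; split; try (auto; auto);
                   rewrite !assoc; congruence. }
               split; apply Kx; auto.
            -- left. destruct (notS0 _ Sc0), H1, H2; subst; congruence.
        + destruct H1 as [Sa Ka], H2 as [Sb Kb].
          assert (Kl : forall x, K x -> K (mul c0 x)).
          { intros x [Sx Kx]. split; [auto; auto|].
            destruct (classic (S0 c0)) as [Sc0|Sc0].
            - rewrite !assoc. rewrite (Hsq (mul u c0) x), (Hsq (mul v c0) x); auto;
                auto; auto.
            - rewrite !assoc. destruct (notS0 _ Sc0); subst;
                first [rewrite Huu|rewrite Huv]; first [rewrite Hvu|rewrite Hvv]; auto. }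
          assert (Kr : forall x, K x -> K (mul x c0)).
          { intros x [Sx Kx]. split; [auto; auto|]. rewrite !assoc, Kx; auto. }
          split; right; right; split; first [apply Kl | apply Kr]; split; auto. }
    destruct (delta _ _ Ca rees_cong) as [H|H].
    + destruct (H u v) as [E|[E _]]. right; left; split; unfold UV; auto. auto. exact (S0u E).
    + destruct (H c z) as [E|[[E1 E2]|[[_ E] _]]]; [right; auto | | | ].
      * subst. apply Nc. rewrite !zr; auto.
      * destruct E1; subst; [exact (S0u Sc)|exact (S0v Sc)].
      * apply Nc. auto.
Qed.

Notation L1 := (lmul1 _ mul).
Notation R1 := (rmul1 _ mul).

Lemma nilfix b p q : S0 b -> b <> z -> b = R1 (L1 p b) q ->
  (forall p', p = Some p' -> ~ S0 p') /\ (forall q', q = Some q' -> ~ S0 q').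
Proof.
  intros Sb Nb E. split.
  - intros p' -> Sp.
    assert (Hn : forall n, exists w, b = R1 (mul (pow mul p' n) b) w).
    { induction n as [|n [w IH]].
      - exists q. exact E.
      - exists (oc _ mul q w). simpl.
        rewrite IH at 1. rewrite E at 1. simpl.
        rewrite <- (rmul_rmul _ _ assoc). f_equal.
        change (mul (pow mul p' n) (R1 (mul p' b) q)) with (L1 (Some (pow mul p' n)) (R1 (mul p' b) q)). rewrite (lmul_rmul _ _ assoc). simpl.
        rewrite assoc. reflexivity. }
    destruct (Hnil p' Sp) as [n Hp]. destruct (Hn n) as [w Hw].
    rewrite Hp, zl in Hw. destruct w; simpl in Hw; [rewrite zl in Hw|]; auto.
  - intros q' -> Sq.
    assert (Hn : forall n, exists w, b = L1 w (mul b (pow mul q' n))).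
    { induction n as [|n [w IH]].
      - exists p. rewrite E at 1. simpl. destruct p; simpl; auto.
      - exists (oc _ mul w p). simpl.
        rewrite IH at 1. rewrite E at 1. simpl.
        rewrite <- (lmul_lmul _ _ assoc). f_equal.
        rewrite <- (pow_comm _ _ assoc). destruct p; simpl; rewrite <- !assoc; reflexivity. }
    destruct (Hnil q' Sq) as [n Hp]. destruct (Hn n) as [w Hw].
    rewrite Hp, zr in Hw. destruct w; simpl in Hw; [rewrite zr in Hw|]; auto.
Qed.

Lemma JS0 a y : S0 a -> Jideal mul a y -> S0 y.
Proof. intros Sa [s [t ->]]. destruct s, t; simpl; auto. Qed.

Lemma uw w : w = u \/ w = v -> mul u w = w /\ mul v w = w.
Proof. intros [->| ->]; auto. Qed.

Section B.
Variable x0 : T.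
Hypothesis Sx0 : S0 x0.
Hypothesis Nx0 : mul x0 u <> mul x0 v.
Definition b := mul x0 u.
Definition c := mul x0 v.
Lemma Sb : S0 b. Proof. unfold b; auto. Qed.
Lemma Sc : S0 c. Proof. unfold c; auto. Qed.
Lemma bu : mul b u = b. Proof. unfold b. rewrite <- assoc, Huu. auto. Qed.
Lemma bv : mul b v = c. Proof. unfold b, c. rewrite <- assoc, Huv. auto. Qed.
Lemma cu : mul c u = b. Proof. unfold b, c. rewrite <- assoc, Hvu. auto. Qed.
Lemma cv : mul c v = c. Proof. unfold c. rewrite <- assoc, Hvv. auto. Qed.
Lemma bc : b <> c. Proof. exact Nx0. Qed.
Lemma bz : b <> z. Proof. intro E. apply bc. rewrite <- bv, E, zl. reflexivity. Qed.
Lemma cz : c <> z. Proof. intro E. apply bc. rewrite <- cu, E, zl. reflexivity. Qed.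
Lemma Jbc : Jideal mul b c. Proof. exists None, (Some v). simpl. symmetry; apply bv. Qed.
Lemma Jcb : Jideal mul c b. Proof. exists None, (Some u). simpl. symmetry; apply cu. Qed.

Lemma core y : Jideal mul b y -> Jideal mul y b -> y = b \/ y = c.
Proof.
  intros [s [t Ey]] [s' [t' Eb]]. subst y.
  rewrite (lmul_rmul _ _ assoc), (rmul_rmul _ _ assoc), (lmul_lmul _ _ assoc) in Eb.
  destruct (nilfix _ _ _ Sb bz Eb) as [N1 N2].
  assert (Ht : t = None \/ t = Some u \/ t = Some v).
  { destruct t as [t0|]; auto.
    destruct (classic (S0 t0)) as [St|St].
    - exfalso. destruct t' as [t1|]; simpl in N2.
      + apply (N2 _ eq_refl); auto.
      + apply (N2 _ eq_refl); auto.
    - destruct (notS0 _ St); subst; auto. }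
  assert (Hs : L1 s b = b).
  { destruct s as [s0|]; auto.
    destruct (classic (S0 s0)) as [Ss|Ss].
    - exfalso. destruct s' as [s1|]; simpl in N1.
      + apply (N1 _ eq_refl); auto.
      + apply (N1 _ eq_refl); auto.
    - assert (Hw : exists w, oc _ mul s' (Some s0) = Some w /\ (w = u \/ w = v)).
      { destruct s' as [s1|]; simpl.
        - exists (mul s1 s0). split; auto. apply notS0. apply (N1 _ eq_refl).
        - exists s0. split; auto. apply notS0. apply (N1 _ eq_refl). }
      destruct Hw as [w [Ew Hw]]. rewrite Ew in Eb. simpl in Eb.
      assert (Hub : forall a, a = u \/ a = v -> mul a b = b).
      { intros a Ha. rewrite Eb at 1.
        change (mul a (R1 (mul w b) (oc _ mul t t'))) with (L1 (Some a) (R1 (mul w b) (oc _ mul t t'))).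
        rewrite (lmul_rmul _ _ assoc). simpl. rewrite assoc.
        destruct Ha as [-> | ->]; rewrite (proj1 (uw w Hw)) || rewrite (proj2 (uw w Hw));
        symmetry; exact Eb. }
      simpl. apply Hub. apply notS0; auto. }
  rewrite Hs. destruct Ht as [-> | [-> | ->]]; simpl; auto.
  - left; apply bu.
  - right; apply bv.
Qed.

Definition I y := Jideal mul b y /\ y <> b /\ y <> c.

Lemma I_l s y : I y -> I (mul s y).
Proof.
  intros [J [N1 N2]]. split; [apply Jl; auto|]. split; intro E.
  - destruct (core y J) as [|]; auto. exists (Some s), None. simpl. auto.
  - destruct (core y J) as [|]; auto. apply (Jtrans _ _ assoc _ c); [|apply Jcb].
    exists (Some s), None. simpl. auto.
Qed.

Lemma I_r s y : I y -> I (mul y s).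
Proof.
  intros [J [N1 N2]]. split; [apply Jr; auto|]. split; intro E.
  - destruct (core y J) as [|]; auto. exists None, (Some s). simpl. auto.
  - destruct (core y J) as [|]; auto. apply (Jtrans _ _ assoc _ c); [|apply Jcb].
    exists None, (Some s). simpl. auto.
Qed.

Lemma Iz : I z.
Proof. split; [|split; intro E; [apply bz|apply cz]; auto].
  exists (Some z), None. simpl. symmetry. apply Hzero, Sb. Qed.

Lemma IS0 y : I y -> S0 y.
Proof. intros [J _]. eapply JS0; [apply Sb|exact J]. Qed.

Lemma Ib : ~ I b. Proof. intros [_ [N _]]; auto. Qed.
Lemma Ic : ~ I c. Proof. intros [_ [_ N]]; auto. Qed.
Lemma Iu : ~ I u. Proof. intro H. apply S0u. apply IS0; auto. Qed.
Lemma Iv : ~ I v. Proof. intro H. apply S0v. apply IS0; auto. Qed.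

Lemma JbI y : Jideal mul b y -> I y \/ y = b \/ y = c.
Proof. intro J. destruct (classic (y = b)); auto. destruct (classic (y = c)); auto.
  left; split; auto. Qed.

End B.
End A.

Section C.
Variable (T : Type) (mul : T -> T -> T) (S0 : T -> Prop) (z u v : T) (I : T -> Prop).
Hypothesis assoc : associative_op mul.
Hypothesis delta : forall R1 R2, congruence mul R1 -> congruence mul R2 ->
    (forall x y, R1 x y -> R2 x y) \/ (forall x y, R2 x y -> R1 x y).
Hypothesis uv : u <> v.
Hypothesis HS0 : forall x, S0 x <-> (x <> u /\ x <> v).
Hypothesis Hid : forall x s, S0 x -> S0 (mul x s) /\ S0 (mul s x).
Hypothesis Sz : S0 z.
Hypothesis Hnil : forall x, S0 x -> exists n, pow mul x n = z.
Hypothesis Huu : mul u u = u.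
Hypothesis Huv : mul u v = v.
Hypothesis Hvu : mul v u = u.
Hypothesis Hvv : mul v v = v.
Hypothesis Il : forall s y, I y -> I (mul s y).
Hypothesis Ir : forall s y, I y -> I (mul y s).
Hypothesis Iz : I z.
Hypothesis IS0 : forall y, I y -> S0 y.
Variable b0 : T.
Hypothesis Sb0 : S0 b0.
Hypothesis Ib0 : ~ I b0.

Definition Q := option {x : T | ~ I x}.
Definition q (x : T) : Q :=
  match excluded_middle_informative (I x) with
  | left _ => None
  | right h => Some (exist _ x h)
  end.
Definition mulQ (a c : Q) : Q :=
  match a, c with
  | Some x, Some y => q (mul (proj1_sig x) (proj1_sig y))
  | _, _ => None
  end.
Definition sec (a : Q) : T := match a with None => z | Some x => proj1_sig x end.

Lemma q_none x : I x -> q x = None.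
Proof. intro H. unfold q. destruct (excluded_middle_informative (I x)); auto. contradiction. Qed.

Lemma q_some x (h : ~ I x) : q x = Some (exist _ x h).
Proof. unfold q. destruct (excluded_middle_informative (I x)); [contradiction|].
  do 2 f_equal. apply proof_irrelevance. Qed.

Lemma q_sec a : q (sec a) = a.
Proof. destruct a as [[x h]|]; simpl; [apply q_some | apply q_none; auto]. Qed.

Lemma q_inj x y : ~ I y -> q x = q y -> x = y.
Proof. intros hy E. rewrite (q_some y hy) in E. unfold q in E.
  destruct (excluded_middle_informative (I x)); [discriminate|]. injection E; auto. Qed.

Lemma q_hom x y : q (mul x y) = mulQ (q x) (q y).
Proof.
  destruct (classic (I x)) as [hx|hx].
  - rewrite (q_none x hx), q_none; auto.
  - destruct (classic (I y)) as [hy|hy].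
    + rewrite (q_none y hy), q_none; auto. destruct (q x); auto.
    + rewrite (q_some x hx), (q_some y hy). reflexivity.
Qed.

Lemma surj (P : Q -> Prop) : (forall x, P (q x)) -> forall a, P a.
Proof. intros H a. rewrite <- (q_sec a). apply H. Qed.

Lemma assocQ : associative_op mulQ.
Proof.
  intros a. pattern a; apply surj; intros x c. pattern c; apply surj; intros y d.
  pattern d; apply surj; intros w. rewrite <- !q_hom, assoc. reflexivity.
Qed.

Definition S0Q (a : Q) : Prop := S0 (sec a).

Lemma S0Q_q x : S0Q (q x) <-> S0 x.
Proof. unfold S0Q. destruct (classic (I x)) as [h|h].
  - rewrite q_none; simpl; auto. split; auto.
  - rewrite (q_some x h). simpl. tauto. Qed.

Lemma powQ x n : pow mulQ (q x) n = q (pow mul x n).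
Proof. induction n; simpl; auto. rewrite IHn, q_hom. reflexivity. Qed.

Lemma deltaQ : delta_semigroup mulQ.
Proof.
  split; [apply assocQ|]. intros R1 R2 C1 C2.
  assert (Cp : forall R, congruence mulQ R -> congruence mul (fun x y => R (q x) (q y))).
  { intros R [Hr [Hs [Ht Hc]]]. split; [|split; [|split]]; intros; eauto.
    rewrite !q_hom. apply Hc; auto. }
  destruct (delta _ _ (Cp _ C1) (Cp _ C2)) as [H|H]; [left|right]; intros a c;
    rewrite <- (q_sec a), <- (q_sec c); apply H.
Qed.

Lemma IuQ : ~ I u. Proof. intro H. apply IS0, HS0 in H. tauto. Qed.
Lemma IvQ : ~ I v. Proof. intro H. apply IS0, HS0 in H. tauto. Qed.

Lemma T2RQ : T2R mulQ S0Q None (q u) (q v).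
Proof.
  assert (Nu : forall x, q x = q u -> x = u) by (intros; apply q_inj; auto using IuQ).
  assert (Nv : forall x, q x = q v -> x = v) by (intros; apply q_inj; auto using IvQ).
  split; [apply deltaQ|]. split; [intro E; apply uv; auto|].
  split; [intro a; pattern a; apply surj; clear a; intro x; cbv beta; rewrite S0Q_q, HS0; split;
          [intros [A B]; split; intro E; [apply A|apply B]; auto
          |intros [A B]; split; intro E; subst; auto]|].
  split.
  { intros a s. pattern a; apply surj; intro x. pattern s; apply surj; intro y; cbv beta.
    rewrite <- !q_hom, !S0Q_q. apply Hid. }
  split; [unfold S0Q; simpl; auto|].
  split; [intros x _; destruct x; auto|].
  split.
  { intro a; pattern a; apply surj; clear a; intros x Hx; cbv beta in *. rewrite S0Q_q in Hx. destruct (Hnil x Hx) as [n Hn].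
    exists n. rewrite powQ, Hn. apply q_none; auto. }
  split.
  { exists (q b0). split; [apply S0Q_q; auto|]. rewrite (q_some b0 Ib0). discriminate. }
  rewrite <- !q_hom, Huu, Huv, Hvu, Hvv. auto.
Qed.

Lemma Jq a y : Jideal mul a y -> Jideal mulQ (q a) (q y).
Proof.
  intros [s [t ->]]. exists (option_map q s), (option_map q t).
  destruct s, t; simpl; rewrite ?q_hom; auto.
Qed.

Lemma Jq_inv a y : Jideal mulQ (q a) y -> exists y', Jideal mul a y' /\ y = q y'.
Proof.
  intros [s [t ->]]. exists (rmul1 _ mul (lmul1 _ mul (option_map sec s) a) (option_map sec t)).
  split; [eexists; eexists; reflexivity|].
  destruct s, t; simpl; rewrite ?q_hom, ?q_sec; auto.
Qed.

Lemma JQnone y : Jideal mulQ None y -> y = None.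
Proof. intros [s [t ->]]. destruct s, t; simpl; auto; destruct q0; auto. Qed.

End C.

Section D.
Variable (T : Type) (mul : T -> T -> T) (S0 : T -> Prop) (z u v : T).
Hypothesis assoc : associative_op mul.
Hypothesis delta : forall R1 R2, congruence mul R1 -> congruence mul R2 ->
    (forall x y, R1 x y -> R2 x y) \/ (forall x y, R2 x y -> R1 x y).
Hypothesis uv : u <> v.
Hypothesis HS0 : forall x, S0 x <-> (x <> u /\ x <> v).
Hypothesis Hid : forall x s, S0 x -> S0 (mul x s) /\ S0 (mul s x).
Hypothesis Sz : S0 z.
Hypothesis Hzero : forall x, S0 x -> mul z x = z /\ mul x z = z.
Hypothesis Hnil : forall x, S0 x -> exists n, pow mul x n = z.
Hypothesis Huu : mul u u = u.
Hypothesis Huv : mul u v = v.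
Hypothesis Hvu : mul v u = u.
Hypothesis Hvv : mul v v = v.
Variable x0 : T.
Hypothesis Sx0 : S0 x0.
Hypothesis Nx0 : mul x0 u <> mul x0 v.

Let bb := b T mul u x0.
Let cc := c T mul v x0.
Let II := I T mul u v x0.
Let qq := q T II.
Let mQ := mulQ T mul II.

Let IIl : forall s y, II y -> II (mul s y). Proof. exact (I_l T mul S0 z u v assoc HS0 Hid Sz Hzero Hnil Huu Huv Hvu Hvv x0 Sx0 Nx0). Qed.
Let IIr : forall s y, II y -> II (mul y s). Proof. exact (I_r T mul S0 z u v assoc HS0 Hid Sz Hzero Hnil Huu Huv Hvu Hvv x0 Sx0 Nx0). Qed.
Let IIz : II z. Proof. exact (Iz T mul S0 z u v assoc Hid Sz Hzero Huv Hvu x0 Sx0 Nx0). Qed.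
Let Ib' : ~ II bb. Proof. apply Ib. Qed.
Let Ic' : ~ II cc. Proof. apply Ic. Qed.
Let Sbb : S0 bb. Proof. eapply Sb; eauto. Qed.

Lemma JQb x : Jideal mQ (qq bb) x <-> x = None \/ x = qq bb \/ x = qq cc.
Proof.
  split.
  - intro J. destruct (Jq_inv _ _ _ _ IIl IIr IIz _ _ J) as [y [Jy ->]].
    destruct (JbI T mul u v x0 y Jy) as [H|[-> | ->]]; auto.
    left. apply q_none; auto.
  - intros [-> | [-> | ->]].
    + rewrite <- (q_none _ _ z IIz). apply Jq; auto.
      exists (Some z), None. simpl. symmetry. apply Hzero; auto.
    + apply Jrefl.
    + apply Jq; auto. apply Jbc; auto.
Qed.

Lemma assocQ' : associative_op mQ.
Proof. eapply assocQ; eauto. Qed.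

Lemma JQc x : Jideal mQ (qq cc) x <-> Jideal mQ (qq bb) x.
Proof.
  split; intro J; eapply (Jtrans _ _ assocQ'); [|exact J| |exact J]; apply Jq; auto.
  - apply Jcb; auto.
  - apply Jbc; auto.
Qed.

Lemma qbc : qq cc <> qq bb.
Proof. intro E. apply q_inj in E; [|exact Ib']. revert E. unfold cc, bb. apply not_eq_sym. eapply bc; eauto. Qed.

Lemma qbN : qq bb <> None.
Proof. unfold qq. rewrite (q_some _ _ _ Ib'). discriminate. Qed.
Lemma qcN : qq cc <> None.
Proof. unfold qq. rewrite (q_some _ _ _ Ic'). discriminate. Qed.

Lemma JclassQ x : Jclass mQ (qq bb) x <-> x = qq bb \/ x = qq cc.
Proof.
  split.
  - intro H. assert (J : Jideal mQ (qq bb) x) by (apply H, Jrefl).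
    apply JQb in J. destruct J as [-> | J]; auto.
    exfalso. assert (J2 : Jideal mQ None (qq bb)) by (apply H, Jrefl).
    apply JQnone in J2. apply qbN; auto.
  - intros [-> | ->]; intro y; [tauto|]. apply JQc.
Qed.

Lemma IidealQ x : Iideal mQ (qq bb) x <-> x = None.
Proof.
  split.
  - intros [J N]. apply JQb in J. destruct J as [|[E|E]]; auto; exfalso; apply N, JclassQ; auto.
  - intros ->. split; [apply JQb; auto|]. intro H. apply JclassQ in H.
    destruct H as [E|E]; [apply qbN | apply qcN]; auto.
Qed.

Lemma final : exists (T : Type) (mul : T -> T -> T) (S0 : T -> Prop) (z u v b : T),
    T2R mul S0 z u v /\ S0 b /\
    (exists c, c <> b /\ forall x, Jclass mul b x <-> (x = b \/ x = c)) /\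
    (forall x, Iideal mul b x <-> x = z).
Proof.
  exists (Q T II), mQ, (S0Q T S0 z II), None, (qq u), (qq v), (qq bb).
  split; [exact (T2RQ T mul S0 z u v II assoc delta uv HS0 Hid Sz Hnil Huu Huv Hvu Hvv IIl IIr IIz (IS0 T mul S0 u v Hid x0 Sx0) bb Sbb Ib')|].
  split; [apply S0Q_q; first [exact (IS0 T mul S0 u v Hid x0 Sx0) | auto]|].
  split; [exists (qq cc); split; [apply qbc | apply JclassQ]|].
  apply IidealQ.
Qed.
End D.
Theorem proposition5 :
  (exists (T : Type) (mul : T -> T -> T) (S0 : T -> Prop) (z u v : T),
      T2R mul S0 z u v) ->
  exists (T : Type) (mul : T -> T -> T) (S0 : T -> Prop) (z u v b : T),
    T2R mul S0 z u v /\ S0 b /\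
    (* |J_b| = 2 *)
    (exists c, c <> b /\ forall x, Jclass mul b x <-> (x = b \/ x = c)) /\
    (* I(b) = {0} *)
    (forall x, Iideal mul b x <-> x = z).
Proof.
  intros [T [mul [S0 [z [u [v H]]]]]].
  destruct H as [[assoc delta] [uv [HS0 [Hid [Sz [Hzero [Hnil [Hnt [Huu [Huv [Hvu Hvv]]]]]]]]]]].
  destruct (exists_b T mul S0 z u v assoc delta uv HS0 Hid Sz Hzero Hnt Huu Huv Hvu Hvv) as [x0 [Sx0 Nx0]].
  exact (final T mul S0 z u v assoc delta uv HS0 Hid Sz Hzero Hnil Huu Huv Hvu Hvv x0 Sx0 Nx0).
Qed.
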